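(* For fixed $t\in(0,1)$, the map $q\mapsto M(t;q)$ is increasing on $\mathbb{R}$, and \[ \lim_{q\to-\infty}M(t;q)=t^{1/3},\qquad \lim_{q\to\infty}M(t;q)=1. \]
   Context: For $t\in(0,1)$ and $q\in\mathbb{R}$: $M(t;q)=\left(\frac{8}{15q}+\left(1-\frac{8}{15q}\right)t^q\right)^{5/(15q-8)}$ if $q\ne0,\frac8{15}$; $M(t;0)=\left(1-\frac8{15}\ln t\right)^{-5/8}$; $M(t;\frac8{15})=\exp\frac{5(t^{8/15}-1)}{8}$. *)

(* Defs.v *)
From Stdlib Require Import Reals.
From Coquelicot Require Import Coquelicot.
Open Scope R_scope.

Definition M (t q : R) : R :=
  if Req_EM_T q 0 then Rpower (1 - 8/15 * ln t) (-(5/8))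
  else if Req_EM_T q (8/15) then exp (5 * (Rpower t (8/15) - 1) / 8)
  else Rpower (8 / (15 * q) + (1 - 8 / (15 * q)) * Rpower t q) (5 / (15 * q - 8)).

(* Main.v *)
Require Import Defs.
From Stdlib Require Import Reals Lra Lia Psatz.
From Coquelicot Require Import Coquelicot.
Open Scope R_scope.

Definition ea (n : nat) : R := / INR (Factorial.fact n).

Lemma ea_rad : CV_radius ea = p_infty.
Proof.
  apply CV_radius_infinite_DAlembert.
  - intro n. unfold ea. apply Rinv_neq_0_compat. apply not_0_INR. apply Factorial.fact_neq_0.
  - apply is_lim_seq_ext with (fun n => / INR (S n)).
    + intro n. unfold ea. rewrite fact_simpl, mult_INR.
      assert (H1 := INR_fact_neq_0 n). assert (H2 : INR (S n) <> 0) by (apply not_0_INR; lia).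
      rewrite Rabs_pos_eq.
      * field. auto.
      * apply Rlt_le. assert (0 < INR (Factorial.fact n)) by (apply INR_fact_lt_0).
        assert (0 < INR (S n)) by (apply lt_0_INR; lia).
        replace (/ (INR (S n) * INR (Factorial.fact n)) / / INR (Factorial.fact n)) with (/ INR (S n)) by (field; auto).
        apply Rinv_0_lt_compat; auto.
    + apply (is_lim_seq_incr_1 (fun n => / INR n)).
      replace (Finite 0) with (Rbar_inv p_infty) by reflexivity.
      apply is_lim_seq_inv. apply is_lim_seq_INR. discriminate.
Qed.

Definition ga (z : R) : R := PSeries (PS_decr_1 ea) z.
Definition gd (z : R) : R := PSeries (PS_derive (PS_decr_1 ea)) z.

Lemma rad_lt (z : R) : Rbar_lt (Rabs z) (CV_radius (PS_decr_1 ea)).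
Proof. rewrite CV_radius_decr_1, ea_rad. simpl. auto. Qed.

Lemma exp_ga (z : R) : exp z = 1 + z * ga z.
Proof.
  rewrite exp_Reals. unfold ga. rewrite PSeries_decr_1.
  - unfold ea. simpl. f_equal. field.
  - apply CV_radius_inside. change (fun n : nat => / INR (Factorial.fact n)) with ea. rewrite ea_rad. simpl; auto.
Qed.

Lemma ga0 : ga 0 = 1.
Proof. unfold ga. rewrite PSeries_0. unfold PS_decr_1, ea. simpl. field. Qed.

Lemma ga_deriv (z : R) : is_derive ga z (gd z).
Proof. apply is_derive_PSeries, rad_lt. Qed.

Lemma gd_deriv (z : R) : ex_derive gd z.
Proof. unfold gd. apply ex_derive_PSeries. rewrite CV_radius_derive. apply rad_lt. Qed.

Lemma ga_pos (z : R) : 0 < ga z.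
Proof.
  destruct (Req_dec z 0) as [->|Hz]. rewrite ga0; lra.
  assert (E := exp_ga z).
  destruct (Rlt_or_le 0 z) as [H|H].
  - assert (1 + z < exp z) by (apply exp_ineq1; auto).
    destruct (Rlt_or_le 0 (ga z)); auto.
    assert (z * ga z <= 0) by (apply Rmult_le_0_l; lra). lra.
  - assert (exp z < 1) by (rewrite <- exp_0; apply exp_increasing; lra).
    destruct (Rlt_or_le 0 (ga z)); auto.
    assert (0 <= z * ga z) by (replace (z * ga z) with ((-z) * (- ga z)) by ring; apply Rmult_le_pos; lra). lra.
Qed.

Lemma mvt (F F' : R -> R) a b : a < b ->
  (forall x, a <= x <= b -> is_derive F x (F' x)) ->
  exists c, F b - F a = F' c * (b - a) /\ a < c < b.
Proof.
  intros Hab H. apply MVT_cor2; auto. intros c Hc. apply is_derive_Reals. auto.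
Qed.

Lemma incr_on (F F' : R -> R) a b : a < b ->
  (forall x, a <= x <= b -> is_derive F x (F' x)) ->
  (forall x, a <= x <= b -> 0 < F' x) -> F a < F b.
Proof.
  intros Hab H1 H2. destruct (mvt F F' a b Hab H1) as [c [Hc1 Hc2]].
  assert (0 < F' c) by (apply H2; lra). nra.
Qed.

Lemma incr_glob (F F' : R -> R) z0 :
  (forall x, is_derive F x (F' x)) -> (forall x, 0 <= F' x) ->
  (forall x, x <> z0 -> 0 < F' x) -> forall a b, a < b -> F a < F b.
Proof.
  intros H1 H2 H3 a b Hab.
  set (m1 := a + (b - a)/3). set (m2 := a + 2*(b-a)/3).
  destruct (mvt F F' a m1) as [c1 [E1 C1]]; [unfold m1; lra| intros; auto|].
  destruct (mvt F F' m1 m2) as [c2 [E2 C2]]; [unfold m1,m2; lra| intros; auto|].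
  destruct (mvt F F' m2 b) as [c3 [E3 C3]]; [unfold m2; lra| intros; auto|].
  assert (P1 := H2 c1). assert (P2 := H2 c2). assert (P3 := H2 c3).
  assert (L1 : 0 < m1 - a) by (unfold m1; lra).
  assert (L2 : 0 < m2 - m1) by (unfold m1, m2; lra).
  assert (L3 : 0 < b - m2) by (unfold m2; lra).
  destruct (Req_dec c1 z0) as [e|n].
  - assert (c3 <> z0) by (unfold m1, m2 in *; lra).
    assert (0 < F' c3) by auto. nra.
  - assert (0 < F' c1) by auto. nra.
Qed.

Lemma sfun_pos (w : R) : 0 < w -> 0 < exp w - exp (- w) - 2 * w.
Proof.
  intro Hw.
  assert (H := incr_glob (fun w => exp w - exp (- w) - 2 * w)
     (fun w => exp w + exp (- w) - 2) 0).
  assert (K : forall x, exp x + exp (-x) - 2 = (exp x - 1)^2 / exp x).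
  { intro x. rewrite exp_Ropp. assert (exp x > 0) by apply exp_pos. field. lra. }
  simpl in H.
  replace 0 with (exp 0 - exp (-0) - 2 * 0) at 1 by (rewrite Ropp_0, exp_0; ring).
  apply H; auto.
  - intro x. auto_derive; auto. ring.
  - intro x. rewrite K. apply Rmult_le_pos. apply pow2_ge_0. apply Rlt_le, Rinv_0_lt_compat, exp_pos.
  - intros x Hx. rewrite K. apply Rmult_lt_0_compat. 2: apply Rinv_0_lt_compat, exp_pos.
    assert (exp x <> 1). { intro E. apply Hx. rewrite <- exp_0 in E. apply exp_inv in E. auto. }
    assert (exp x - 1 <> 0) by lra. apply pow2_gt_0. auto.
Qed.

Lemma sq_ineq (x : R) : x <> 0 -> 0 < (exp x - 1)^2 - x^2 * exp x.
Proof.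
  intro Hx. set (w := x/2).
  assert (Ex : exp x = exp w * exp w) by (rewrite <- exp_plus; unfold w; f_equal; field).
  assert (Em : exp (- w) = / exp w) by apply exp_Ropp.
  assert (Ap : 0 < exp w) by apply exp_pos.
  set (s := exp w - exp (- w) - 2 * w).
  assert (Fac : (exp x - 1)^2 - x^2 * exp x = (exp w)^2 * (s * (s + 4*w))).
  { unfold s. rewrite Ex, Em. replace x with (2*w) by (unfold w; field). field. lra. }
  rewrite Fac. apply Rmult_lt_0_compat. nra.
  destruct (Rlt_or_le 0 w) as [Hw|Hw].
  - assert (0 < s) by (apply sfun_pos; auto). nra.
  - assert (w <> 0) by (unfold w; lra).
    assert (0 < exp (- w) - exp (- - w) - 2 * (- w)) by (apply sfun_pos; lra).
    rewrite Ropp_involutive in H0. assert (s < 0) by (unfold s; lra). nra.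
Qed.

Lemma g1_ineq (x : R) : x <> 0 -> 0 < x * (exp x * (x^2 - 2*x + 2) - 2).
Proof.
  intro Hx.
  assert (H := incr_glob (fun x => exp x * (x^2 - 2*x + 2) - 2) (fun x => exp x * x^2) 0).
  assert (Hd : forall x, is_derive (fun x => exp x * (x^2 - 2*x + 2) - 2) x (exp x * x^2)).
  { intro y. auto_derive; auto. ring. }
  assert (Hp : forall x, 0 <= exp x * x^2).
  { intro y. apply Rmult_le_pos. apply Rlt_le, exp_pos. apply pow2_ge_0. }
  assert (Hs : forall x, x <> 0 -> 0 < exp x * x^2).
  { intros y Hy. apply Rmult_lt_0_compat. apply exp_pos. apply pow2_gt_0; auto. }
  assert (V0 : exp 0 * (0^2 - 2*0 + 2) - 2 = 0) by (rewrite exp_0; ring).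
  destruct (Rlt_or_le 0 x) as [Hl|Hl].
  - assert (K := H Hd Hp Hs 0 x Hl). cbv beta in K. rewrite V0 in K. nra.
  - assert (K := H Hd Hp Hs x 0 ltac:(lra)). cbv beta in K. rewrite V0 in K. nra.
Qed.

Definition Rx (b x : R) := x + b * (exp x - 1).
Definition Dq (u b q : R) := u * ((1 + b - u*q) / Rx b (u*q) - 1/(u*q)).
Definition D2 (u b q : R) :=
  let x := u*q in
  u^2 * ((x^2 * (- Rx b x - (1 + b - x) * (1 + b * exp x)) + (Rx b x)^2) / (x^2 * (Rx b x)^2)).

Lemma Rx_sign (b x : R) : 0 < b -> x <> 0 -> 0 < x * Rx b x.
Proof.
  intros Hb Hx. unfold Rx.
  destruct (Rlt_or_le 0 x) as [H|H].
  - assert (1 < exp x) by (rewrite <- exp_0; apply exp_increasing; auto).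
    assert (0 < x + b * (exp x - 1)) by nra. nra.
  - assert (exp x < 1) by (rewrite <- exp_0; apply exp_increasing; lra).
    assert (x + b * (exp x - 1) < 0) by nra. nra.
Qed.

Lemma Rx_nz (b x : R) : 0 < b -> x <> 0 -> Rx b x <> 0.
Proof. intros Hb Hx E. assert (K := Rx_sign b x Hb Hx). rewrite E in K. lra. Qed.

Lemma Q_id (b x : R) :
  x^2 * (- Rx b x - (1 + b - x) * (1 + b * exp x)) + (Rx b x)^2
  = b * (x * (exp x * (x^2 - 2*x + 2) - 2)) + b^2 * ((exp x - 1)^2 - x^2 * exp x).
Proof. unfold Rx. ring. Qed.

Lemma D2_pos (u b q : R) : 0 < u -> 0 < b -> q <> 0 -> 0 < D2 u b q.
Proof.
  intros Hu Hb Hq. unfold D2. set (x := u*q).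
  assert (Hx : x <> 0) by (unfold x; apply Rmult_integral_contrapositive; split; lra).
  rewrite Q_id. apply Rmult_lt_0_compat. nra.
  assert (A1 := g1_ineq x Hx). assert (A2 := sq_ineq x Hx).
  assert (Rn := Rx_nz b x Hb Hx).
  apply Rdiv_lt_0_compat.
  - assert (0 < b^2) by nra. nra.
  - apply Rmult_lt_0_compat; apply pow2_gt_0; auto.
Qed.

Lemma Dq_deriv (u b q : R) : 0 < u -> 0 < b -> q <> 0 -> is_derive (Dq u b) q (D2 u b q).
Proof.
  intros Hu Hb Hq. unfold Dq, D2.
  assert (Hx : u*q <> 0) by (apply Rmult_integral_contrapositive; split; lra).
  assert (Rn := Rx_nz b (u*q) Hb Hx). unfold Rx in *.
  auto_derive.
  - split; auto.
  - field. repeat split; auto; lra.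
Qed.

Lemma Dq_incr (u b a c : R) : 0 < u -> 0 < b -> a < c -> (0 < a \/ c < 0) -> Dq u b a < Dq u b c.
Proof.
  intros Hu Hb Hac Hs. apply (incr_on _ (D2 u b)); auto.
  - intros x Hx. apply Dq_deriv; auto; lra.
  - intros x Hx. apply D2_pos; auto; lra.
Qed.

Definition Lc (f fd : R -> R) (p q : R) : R :=
  if Req_EM_T q p then fd p else (f q - f p) / (q - p).

Lemma slope (f fd : R -> R) x y : (forall z, is_derive f z (fd z)) -> x < y ->
  exists c, x < c < y /\ (f y - f x) / (y - x) = fd c.
Proof.
  intros H Hxy. destruct (mvt f fd x y Hxy (fun z _ => H z)) as [c [E C]].
  exists c. split; auto. rewrite E. field. lra.
Qed.

Lemma chord (f fd : R -> R) p : (forall z, is_derive f z (fd z)) ->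
  (forall x y, x < y -> fd x < fd y) ->
  forall q1 q2, q1 < q2 -> Lc f fd p q1 < Lc f fd p q2.
Proof.
  intros Hd Hi q1 q2 H12. unfold Lc.
  destruct (Req_EM_T q1 p) as [e1|n1]; destruct (Req_EM_T q2 p) as [e2|n2].
  - lra.
  - subst. destruct (slope f fd p q2 Hd H12) as [c [C E]]. rewrite E. apply Hi; lra.
  - subst. destruct (slope f fd q1 p Hd H12) as [c [C E]].
    replace ((f q1 - f p) / (q1 - p)) with ((f p - f q1) / (p - q1)) by (field; lra).
    rewrite E. apply Hi; lra.
  - destruct (Rlt_or_le q2 p) as [A|A].
    + destruct (slope f fd q1 q2 Hd H12) as [c1 [C1 E1]].
      destruct (slope f fd q2 p Hd A) as [c2 [C2 E2]].
      assert (fd c1 < fd c2) by (apply Hi; lra).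
      replace ((f q2 - f p) / (q2 - p)) with ((f p - f q2) / (p - q2)) by (field; lra).
      replace ((f q1 - f p) / (q1 - p)) with
        (((q2 - q1) * ((f q2 - f q1) / (q2 - q1)) + (p - q2) * ((f p - f q2) / (p - q2))) / (p - q1))
        by (field; repeat split; lra).
      rewrite E1, E2. apply (Rmult_lt_reg_r (p - q1)). lra.
      unfold Rdiv. rewrite Rmult_assoc, Rinv_l by lra. nra.
    + destruct (Rlt_or_le q1 p) as [B|B].
      * assert (A' : p < q2) by lra.
        destruct (slope f fd q1 p Hd B) as [c1 [C1 E1]].
        destruct (slope f fd p q2 Hd A') as [c2 [C2 E2]].
        replace ((f q1 - f p) / (q1 - p)) with ((f p - f q1) / (p - q1)) by (field; lra).
        rewrite E1, E2. apply Hi; lra.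
      * assert (B' : p < q1) by lra.
        destruct (slope f fd p q1 Hd B') as [c1 [C1 E1]].
        destruct (slope f fd q1 q2 Hd H12) as [c2 [C2 E2]].
        assert (fd c1 < fd c2) by (apply Hi; lra).
        replace ((f q2 - f p) / (q2 - p)) with
          (((q1 - p) * ((f q1 - f p) / (q1 - p)) + (q2 - q1) * ((f q2 - f q1) / (q2 - q1))) / (q2 - p))
          by (field; repeat split; lra).
        rewrite E1, E2. apply (Rmult_lt_reg_r (q2 - p)). lra.
        unfold Rdiv. rewrite Rmult_assoc, Rinv_l by lra. nra.
Qed.

Definition Bf (u q : R) := exp (-(u*q)) + (8/15*u) * ga (-(u*q)).
Definition Bd (u q : R) := -u * exp (-(u*q)) - (8/15*u) * u * gd (-(u*q)).
Definition ff (u q : R) := ln (Bf u q).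
Definition fd (u q : R) := Bd u q / Bf u q.

Lemma Bf_pos u q : 0 < u -> 0 < Bf u q.
Proof.
  intro Hu. unfold Bf. assert (H1 := exp_pos (-(u*q))). assert (H2 := ga_pos (-(u*q))).
  assert (0 < 8/15*u*ga (-(u*q))) by (apply Rmult_lt_0_compat; lra). lra.
Qed.

Lemma f_deriv u q : 0 < u -> is_derive (ff u) q (fd u q).
Proof.
  intro Hu. assert (P := Bf_pos u q Hu). unfold ff, fd, Bf, Bd in *.
  auto_derive.
  - split. exists (gd (-(u*q))). apply ga_deriv. split; auto.
  - change (fun x : R => ga x) with ga. rewrite (is_derive_unique _ _ _ (ga_deriv _)). field. lra.
Qed.

Lemma Bf_closed u q : 0 < u -> q <> 0 -> Bf u q = exp (-(u*q)) + 8/15 * (1 - exp (-(u*q))) / q.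
Proof.
  intros Hu Hq. unfold Bf. assert (E := exp_ga (-(u*q))).
  rewrite E. field. auto.
Qed.

Lemma fd_closed u q : 0 < u -> q <> 0 -> fd u q = Dq u (8/15*u) q.
Proof.
  intros Hu Hq.
  assert (H1 := f_deriv u q Hu).
  assert (H2 : is_derive (ff u) q (Dq u (8/15*u) q)).
  { apply is_derive_ext_loc with (fun t => ln (exp (-(u*t)) + 8/15 * (1 - exp (-(u*t))) / t)).
    - assert (Hp : 0 < Rabs q) by (apply Rabs_pos_lt; auto).
      exists (mkposreal _ Hp). intros y Hy. unfold ff. rewrite Bf_closed; auto.
      intro e. subst y. change (Rabs (0 - q) < Rabs q) in Hy.
      rewrite Rminus_0_l, Rabs_Ropp in Hy. lra.
    - assert (P := Bf_pos u q Hu). rewrite Bf_closed in P; auto.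
      assert (Hx : u*q <> 0) by (apply Rmult_integral_contrapositive; split; lra).
      assert (Rn := Rx_nz (8/15*u) (u*q) ltac:(lra) Hx).
      unfold Dq, Rx in *.
      auto_derive.
      + repeat split; auto.
      + rewrite !exp_Ropp. assert (0 < exp (u*q)) by apply exp_pos.
        rewrite exp_Ropp in P.
        field. repeat split; try lra. 
          destruct (Rlt_or_le 0 q) as [Hq'|Hq'].
          -- assert (1 < exp (u*q)) by (rewrite <- exp_0; apply exp_increasing; nra). lra.
          -- assert (exp (u*q) < 1) by (rewrite <- exp_0; apply exp_increasing; nra). lra. }
  rewrite <- (is_derive_unique _ _ _ H1). apply is_derive_unique; auto.
Qed.

Lemma fd_cont u : 0 < u -> continuity_pt (fd u) 0.
Proof.
  intro Hu. apply continuity_pt_filterlim. apply (ex_derive_continuous (fd u)).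
  assert (P := Bf_pos u 0 Hu). unfold fd, Bf, Bd in *.
  auto_derive. repeat split.
  all: try (exists (gd (-(u*0))); apply ga_deriv).
  all: try apply gd_deriv.
  all: lra.
Qed.

Lemma fd_neg_side u x : 0 < u -> x < 0 -> fd u x < fd u 0.
Proof.
  intros Hu Hx.
  assert (K : forall a c, a < c < 0 -> fd u a < fd u c).
  { intros a c H. rewrite !fd_closed by (auto; lra). apply Dq_incr; auto; lra. }
  assert (H1 : fd u x < fd u (x/2)) by (apply K; lra).
  assert (fd u (x/2) <= fd u 0).
  { destruct (Rle_or_lt (fd u (x/2)) (fd u 0)) as [h|h]; auto. exfalso.
    assert (C := fd_cont u Hu). unfold continuity_pt, continue_in, limit1_in, limit_in in C.
    destruct (C (fd u (x/2) - fd u 0) ltac:(lra)) as [d [Hd Hc]].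
    set (y := Rmax (x/4) (-d/2)).
    assert (y < 0) by (unfold y; apply Rmax_lub_lt; lra).
    assert (x/4 <= y) by (unfold y; apply Rmax_l).
    assert (-d/2 <= y) by (unfold y; apply Rmax_r).
    assert (Hy : fd u (x/2) < fd u y) by (apply K; lra).
    assert (Hc' := Hc y). simpl in Hc'. unfold R_dist in Hc'.
    assert (Rabs (fd u y - fd u 0) < fd u (x / 2) - fd u 0).
    { apply Hc'. split. unfold D_x, no_cond. split; auto. lra.
      rewrite Rminus_0_r, Rabs_left by lra. lra. }
    rewrite Rabs_right in H3 by lra. lra. }
  lra.
Qed.

Lemma fd_pos_side u x : 0 < u -> 0 < x -> fd u 0 < fd u x.
Proof.
  intros Hu Hx.
  assert (K : forall a c, 0 < a < c -> fd u a < fd u c).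
  { intros a c H. rewrite !fd_closed by (auto; lra). apply Dq_incr; auto; lra. }
  assert (H1 : fd u (x/2) < fd u x) by (apply K; lra).
  assert (fd u 0 <= fd u (x/2)).
  { destruct (Rle_or_lt (fd u 0) (fd u (x/2))) as [h|h]; auto. exfalso.
    assert (C := fd_cont u Hu). unfold continuity_pt, continue_in, limit1_in, limit_in in C.
    destruct (C (fd u 0 - fd u (x/2)) ltac:(lra)) as [d [Hd Hc]].
    set (y := Rmin (x/4) (d/2)).
    assert (0 < y) by (unfold y; apply Rmin_glb_lt; lra).
    assert (y <= x/4) by (unfold y; apply Rmin_l).
    assert (y <= d/2) by (unfold y; apply Rmin_r).
    assert (Hy : fd u y < fd u (x/2)) by (apply K; lra).
    assert (Hc' := Hc y). simpl in Hc'. unfold R_dist in Hc'.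
    assert (Rabs (fd u y - fd u 0) < fd u 0 - fd u (x / 2)).
    { apply Hc'. split. unfold D_x, no_cond. split; auto. lra.
      rewrite Rminus_0_r, Rabs_right by lra. lra. }
    rewrite Rabs_left in H3 by lra. lra. }
  lra.
Qed.

Lemma fd_incr u x y : 0 < u -> x < y -> fd u x < fd u y.
Proof.
  intros Hu Hxy.
  destruct (Rlt_or_le 0 x) as [A|A].
  - rewrite !fd_closed by (auto; lra). apply Dq_incr; auto; lra.
  - destruct (Rlt_or_le y 0) as [B|B].
    + rewrite !fd_closed by (auto; lra). apply Dq_incr; auto; lra.
    + destruct (Req_dec x 0) as [e|n]; destruct (Req_dec y 0) as [e'|n'].
      * lra.
      * subst x. apply fd_pos_side; auto; lra.
      * subst y. apply fd_neg_side; auto; lra.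
      * assert (fd u x < fd u 0) by (apply fd_neg_side; auto; lra).
        assert (fd u 0 < fd u y) by (apply fd_pos_side; auto; lra). lra.
Qed.

Definition Lf (u q : R) := Lc (ff u) (fd u) (8/15) q.

Lemma ff_c u : 0 < u -> ff u (8/15) = 0.
Proof.
  intro Hu. unfold ff. rewrite Bf_closed by lra.
  replace (exp (- (u * (8 / 15))) + 8 / 15 * (1 - exp (- (u * (8 / 15)))) / (8 / 15)) with 1 by field.
  apply ln_1.
Qed.

Lemma M_eq t q : 0 < t < 1 -> M t q = exp (Lf (- ln t) q / 3).
Proof.
  intro ht. set (u := - ln t).
  assert (Hu : 0 < u). { unfold u. assert (ln t < ln 1) by (apply ln_increasing; lra). rewrite ln_1 in H. lra. }
  assert (Rp : forall q, Rpower t q = exp (-(u*q))). { intro r. unfold Rpower, u. f_equal. ring. }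
  unfold M, Lf, Lc. rewrite ff_c by auto.
  destruct (Req_EM_T q 0) as [e|n].
  - subst q. destruct (Req_EM_T 0 (8/15)) as [e'|_]; [lra|].
    unfold ff, Bf. replace (-(u*0)) with 0 by ring. rewrite exp_0, ga0.
    unfold Rpower. f_equal. replace (1 - 8/15 * ln t) with (1 + 8/15*u*1) by (unfold u; ring).
    field.
  - destruct (Req_EM_T q (8/15)) as [e'|n'].
    + subst q. rewrite fd_closed by lra. unfold Dq, Rx. rewrite Rp.
      f_equal. rewrite exp_Ropp. assert (0 < exp (u * (8/15))) by apply exp_pos.
      replace (1 + 8 / 15 * u - u * (8 / 15)) with 1 by ring.
      replace (u * (8 / 15) + 8 / 15 * u * (exp (u * (8 / 15)) - 1)) with (u * (8/15) * exp (u * (8/15))) by ring.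
      field. lra.
    + rewrite (Rp q). unfold Rpower. f_equal. unfold ff. rewrite Bf_closed by auto.
      replace (8 / (15 * q) + (1 - 8 / (15 * q)) * exp (-(u*q))) with
        (exp (-(u*q)) + 8 / 15 * (1 - exp (-(u*q))) / q) by (field; auto).
      assert (15 * q - 8 <> 0) by (intro; apply n'; lra).
      field. lra.
Qed.

Lemma Lf_neg u q : 0 < u -> q < 0 -> Lf u q = ff u q / (q - 8/15).
Proof.
  intros Hu Hq. unfold Lf, Lc. destruct (Req_EM_T q (8/15)); [lra|].
  rewrite ff_c by auto. f_equal. ring.
Qed.

Lemma Lf_pos u q : 0 < u -> 8/15 < q -> Lf u q = ff u q / (q - 8/15).
Proof.
  intros Hu Hq. unfold Lf, Lc. destruct (Req_EM_T q (8/15)); [lra|].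
  rewrite ff_c by auto. f_equal. ring.
Qed.

Lemma ln_le y : 0 < y -> ln y <= y - 1.
Proof. intro Hy. assert (H := exp_ineq1_le (ln y)). rewrite exp_ln in H by auto. lra. Qed.

Lemma Lf_minf u : 0 < u -> is_lim (Lf u) m_infty (- u).
Proof.
  intro Hu. apply is_lim_spec. intro eps. simpl.
  set (c := 8/15).
  exists (Rmin (-1) (c - (c + u*c)/eps)). intros q Hq.
  assert (Hq1 : q < -1) by (eapply Rlt_le_trans; [apply Hq| apply Rmin_l]).
  assert (Hq2 : q < c - (c + u*c)/eps) by (eapply Rlt_le_trans; [apply Hq| apply Rmin_r]).
  rewrite Lf_neg by (auto; lra). fold c.
  set (E := exp (-(u*q))).
  assert (HE : 1 < E) by (unfold E; rewrite <- exp_0; apply exp_increasing; nra).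
  assert (HB : ff u q = ln (E + c * (1 - E) / q)) by (unfold ff; rewrite Bf_closed by (auto; lra); reflexivity).
  assert (L1 : E < E + c * (1 - E) / q).
  { assert (0 < c * (1 - E) / q).
    { replace (c * (1 - E) / q) with ((c * (E - 1)) * (- / q)) by (field; lra).
      assert (/ q < 0) by (apply Rinv_lt_0_compat; lra).
      apply Rmult_lt_0_compat. unfold c; nra. lra. }
    lra. }
  assert (L2 : E + c * (1 - E) / q < E * (1 - c / q)).
  { replace (E * (1 - c/q)) with (E + c*(1-E)/q - c/q) by (field; lra).
    assert (c / q < 0). { unfold Rdiv. assert (/ q < 0) by (apply Rinv_lt_0_compat; lra). unfold c; nra. }
    lra. }
  assert (lo : -(u*q) < ff u q).
  { rewrite HB. replace (-(u*q)) with (ln E) by (unfold E; apply ln_exp). apply ln_increasing; lra. }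
  assert (hi : ff u q < -(u*q) - c/q).
  { rewrite HB. assert (0 < 1 - c/q). { assert (c/q < 0). { unfold Rdiv. assert (/ q < 0) by (apply Rinv_lt_0_compat; lra). unfold c; nra. } lra. }
    apply Rlt_le_trans with (ln (E * (1 - c/q))).
    - apply ln_increasing; lra.
    - rewrite ln_mult by lra. unfold E at 1. rewrite ln_exp. assert (K := ln_le (1 - c/q) H). lra. }
  assert (hc : - (c / q) < c).
  { replace (-(c/q)) with (c * (-/q)) by (field; lra).
    assert (-/q < 1). { replace (-/q) with (/(-q)) by (field; lra). rewrite <- Rinv_1. apply Rinv_lt_contravar; lra. }
    unfold c; nra. }
  assert (Hn : Rabs (ff u q + u * (q - c)) < c + u * c).
  { assert (0 < u * c) by (unfold c; lra). rewrite Rmult_minus_distr_l. apply Rabs_def1; lra. }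
  replace (ff u q / (q - c) - - u) with ((ff u q + u * (q - c)) / (q - c)) by (field; lra).
  unfold Rdiv. rewrite Rabs_mult, Rabs_Rinv by lra. rewrite (Rabs_left (q - c)) by lra. replace (-(q-c)) with (c-q) by ring.
  assert (Hep := cond_pos eps).
  assert (Hd : (c + u*c) / eps < c - q) by lra.
  apply (Rmult_lt_reg_r (c - q)). lra.
  rewrite Rmult_assoc, Rinv_l by lra. rewrite Rmult_1_r.
  apply Rlt_trans with (c + u*c); auto.
  apply (Rmult_lt_reg_r (/eps)). apply Rinv_0_lt_compat; auto.
  replace (eps * (c - q) * / eps) with (c - q) by (field; lra). auto.
Qed.

Lemma Lf_pinf u : 0 < u -> is_lim (Lf u) p_infty 0.
Proof.
  intro Hu. apply is_lim_spec. intro eps. simpl.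
  assert (Hep := cond_pos eps).
  assert (Hl := is_lim_div_ln_p). apply is_lim_spec in Hl.
  destruct (Hl (mkposreal (eps/4) ltac:(lra))) as [N HN]. simpl in HN.
  set (c := 8/15).
  set (K := - ln c).
  assert (HK : 0 < K). { unfold K. assert (ln c < ln 1) by (apply ln_increasing; unfold c; lra). rewrite ln_1 in H. lra. }
  exists (Rmax (Rmax N 2) (4 * K / eps)). intros q Hq.
  assert (Hq1 : N < q) by (eapply Rle_lt_trans; [|apply Hq]; eapply Rle_trans; [apply Rmax_l|apply Rmax_l]).
  assert (Hq2 : 2 < q) by (eapply Rle_lt_trans; [|apply Hq]; eapply Rle_trans; [apply Rmax_r|apply Rmax_l]).
  assert (Hq3 : 4 * K / eps < q) by (eapply Rle_lt_trans; [|apply Hq]; apply Rmax_r).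
  assert (HNq := HN q Hq1). rewrite Rminus_0_r in HNq.
  rewrite Lf_pos by (auto; lra). fold c. rewrite Rminus_0_r.
  set (E := exp (-(u*q))).
  assert (HE : E < 1) by (unfold E; rewrite <- exp_0; apply exp_increasing; nra).
  assert (HE0 : 0 < E) by apply exp_pos.
  assert (HB : ff u q = ln (c / q + E * (1 - c / q))).
  { unfold ff; rewrite Bf_closed by (auto; lra). fold E. apply (f_equal ln). unfold c. field. lra. }
  assert (Hcq : 0 < c / q < 1).
  { split. unfold Rdiv, c. apply Rmult_lt_0_compat. lra. apply Rinv_0_lt_compat; lra.
    apply (Rmult_lt_reg_r q). lra. unfold Rdiv. rewrite Rmult_assoc, Rinv_l by lra. unfold c; lra. }
  assert (B1 : c / q < c / q + E * (1 - c / q)) by nra.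
  assert (B2 : c / q + E * (1 - c / q) < 1) by nra.
  assert (hi : ff u q < 0). { rewrite HB, <- ln_1. apply ln_increasing; lra. }
  assert (lo : ln c - ln q < ff u q).
  { rewrite HB. replace (ln c - ln q) with (ln (c / q)).
    apply ln_increasing; lra.
    unfold Rdiv. rewrite ln_mult, ln_Rinv. ring. lra. unfold c; lra. apply Rinv_0_lt_compat; lra. }
  assert (lnq : 0 < ln q). { rewrite <- ln_1. apply ln_increasing; lra. }
  rewrite Rabs_left1.
  2: { unfold Rdiv. assert (0 < / (q - c)) by (apply Rinv_0_lt_compat; unfold c; lra). nra. }
  replace (- (ff u q / (q - c))) with ((- ff u q) / (q - c)) by (field; unfold c; lra).
  apply Rle_lt_trans with ((ln q + K) / (q - c)).
  { unfold Rdiv. apply Rmult_le_compat_r. apply Rlt_le, Rinv_0_lt_compat; unfold c; lra. unfold K; lra. }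
  apply Rle_lt_trans with (2 * (ln q / q) + 2 * K / q).
  { replace (2 * (ln q / q) + 2 * K / q) with (2 * (ln q + K) / q) by (field; lra).
    unfold Rdiv. rewrite Rmult_assoc.
    assert (0 < ln q + K) by lra.
    assert (/ (q - c) <= 2 * / q).
    { replace (2 * / q) with (/ (q / 2)) by (field; lra). apply Rinv_le_contravar. lra. unfold c; lra. }
    nra. }
  assert (ln q / q < eps / 4) by (apply Rabs_def2 in HNq; lra).
  assert (2 * K / q < eps / 2).
  { apply (Rmult_lt_compat_r eps) in Hq3; auto.
    replace (4 * K / eps * eps) with (4 * K) in Hq3 by (field; lra).
    apply (Rmult_lt_reg_r q). lra.
    replace (2 * K / q * q) with (2 * K) by (field; lra). lra. }
  lra.
Qed.

Theorem lemma9 (t : R) (ht : 0 < t < 1) :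
  (forall q1 q2 : R, q1 < q2 -> M t q1 < M t q2) /\
  is_lim (fun q => M t q) m_infty (Rpower t (1/3)) /\
  is_lim (fun q => M t q) p_infty 1.
Proof.
  assert (Hu : 0 < - ln t).
  { assert (ln t < ln 1) by (apply ln_increasing; lra). rewrite ln_1 in H. lra. }
  assert (Hcont : forall l, continuous exp l).
  { intro l. apply continuity_pt_filterlim. apply derivable_continuous_pt, derivable_pt_exp. }
  split; [|split].
  - intros q1 q2 H. rewrite !M_eq by auto. apply exp_increasing.
    unfold Rdiv. apply Rmult_lt_compat_r; [lra|].
    apply chord; auto.
    + intro z. apply f_deriv; auto.
    + intros x y Hxy. apply fd_incr; auto.
  - apply is_lim_ext with (fun q => exp (Lf (- ln t) q / 3)).
    { intro y. rewrite M_eq; auto. }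
    replace (Rpower t (1/3)) with (exp (- - ln t / 3)) by (unfold Rpower; f_equal; field).
    apply is_lim_comp_continuous; auto.
    apply (is_lim_scal_r _ (/3) _ (Finite (- - ln t))). apply Lf_minf; auto.
  - apply is_lim_ext with (fun q => exp (Lf (- ln t) q / 3)).
    { intro y. rewrite M_eq; auto. }
    replace 1 with (exp (0 / 3)) by (unfold Rdiv; rewrite Rmult_0_l; apply exp_0).
    apply is_lim_comp_continuous; auto.
    apply (is_lim_scal_r _ (/3) _ (Finite 0)). apply Lf_pinf; auto.
Qed.
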